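(* For a function $F(s,r,\boldsymbol t,\bar{\boldsymbol t})$, the system of six dispersionless Hirota equations (dH1a),(dH1b),(dH2a),(dH2b),(dH3a),(dH3b) is equivalent to the system consisting of (dH1b),(dH2b),(dH3b) together with (dH1c),(dH2c),(dH3c).
   Context: $F=F(s,r,\boldsymbol t,\bar{\boldsymbol t})$ is a smooth function of continuous variables $s,r$ and $\boldsymbol t=(t_1,t_2,\dots)$, $\bar{\boldsymbol t}=(\bar t_1,\bar t_2,\dots)$. $D(z)=\sum_{n\ge1}\frac{z^{-n}}{n}\partial_{t_n}$, $\bar D(z)=\sum_{n\ge1}\frac{z^n}{n}\partial_{\bar t_n}$; identities are understood as formal series in $\lambda^{-1},\mu^{-1}$ (when $D$ appears) and $\lambda,\mu$ (when $\bar D$ appears), for parameters $\lambda\ne\mu$. The equations are: (dH1a) $e^{D(\lambda)D(\mu)F}=\frac{\lambda e^{-\partial_rD(\lambda)F}-\mu e^{-\partial_rD(\mu)F}}{\lambda-\mu}+\frac1{\lambda\mu}e^{(\partial_s+D(\lambda))(\partial_s+D(\mu))F+\partial_r\partial_sF}$; (dH1b) $e^{D(\lambda)D(\mu)F}=\frac{\lambda e^{-\partial_sD(\lambda)F}-\mu e^{-\partial_sD(\mu)F}}{\lambda-\mu}+\frac1{\lambda\mu}e^{(\partial_r+D(\lambda))(\partial_r+D(\mu))F+\partial_r\partial_sF}$; (dH2a) $e^{\bar D(\lambda)\bar D(\mu)F}=\frac{\lambda^{-1}e^{-\partial_r\bar D(\lambda)F}-\mu^{-1}e^{-\partial_r\bar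 D(\mu)F}}{\lambda^{-1}-\mu^{-1}}+\lambda\mu\,e^{(-\partial_s+\bar D(\lambda))(-\partial_s+\bar D(\mu))F-\partial_r\partial_sF}$; (dH2b) $e^{\bar D(\lambda)\bar D(\mu)F}=\frac{\lambda^{-1}e^{\partial_s\bar D(\lambda)F}-\mu^{-1}e^{\partial_s\bar D(\mu)F}}{\lambda^{-1}-\mu^{-1}}+\lambda\mu\,e^{(\partial_r+\bar D(\lambda))(\partial_r+\bar D(\mu))F-\partial_r\partial_sF}$; (dH3a) $e^{D(\lambda)\bar D(\mu)F}=e^{-(\partial_r+\partial_s)\bar D(\mu)F}-\lambda\mu\,e^{-(\partial_rD(\lambda)+\partial_s\bar D(\mu)+\partial_r\partial_s)F}+\lambda\mu\,e^{(-\partial_s+D(\lambda))(-\partial_s+\bar D(\mu))F-(\partial_r+\partial_s)\partial_sF}$; (dH3b) $e^{D(\lambda)\bar D(\mu)F}=1-\frac{\mu}{\lambda}e^{\partial_s(\partial_s+D(\lambda)-\bar D(\mu))F}+\frac{\mu}{\lambda}e^{(\partial_r+D(\lambda))(\partial_r+\bar D(\mu))F}$; (dH1c) $\lambda(e^{-\partial_sD(\lambda)F}-e^{-\partial_rD(\lambda)F})+\lambda^{-1}(e^{\partial_s(\partial_r+\partial_s+D(\lambda))F}-e^{\partial_r(\partial_r+\partial_s+D(\lambda))F})=(\partial_r-\partial_s)\partial_{t_1}F$; (dH2c) $\lambda^{-1}(e^{\partial_s\bar D(\lambda)F}-e^{-\partial_r\bar D(\lambda)F})+\lambda(e^{-\partial_s(\partial_r-\partial_s+\bar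 D(\lambda))F}-e^{\partial_r(\partial_r-\partial_s+\bar D(\lambda))F})=(\partial_r+\partial_s)\partial_{\bar t_1}F$; (dH3c) $(\partial_r+\partial_s)\partial_{\bar t_1}F=e^{-\partial_r\partial_sF}(\partial_r-\partial_s)\partial_{t_1}F$. *)

(* Defs.v *)
From Stdlib Require Import Reals Permutation List Factorial.
Open Scope R_scope.

(* Independent variables: s, r, t_{n+1} (vt n), tbar_{n+1} (vtb n). *)
Inductive var : Type := vs | vr | vt (n : nat) | vtb (n : nat).

Definition var_eq_dec (a b : var) : {a = b} + {a <> b}.
Proof. decide equality; apply PeanoNat.Nat.eq_dec. Defined.

Definition point := var -> R.

Definition upd (x : point) (v : var) (h : R) : point :=
  fun w => if var_eq_dec w v then h else x w.

(* D is the family of all iterated partial derivatives of F: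
   D [] = F, D (v :: l) = d/d v (D l), every iterated partial derivative
   exists everywhere, and (as for any smooth function, by Schwarz)
   it does not depend on the order of differentiation. *)
Definition is_derivative_family (F : point -> R) (D : list var -> point -> R) : Prop :=
  D nil = F /\
  (forall (l : list var) (v : var) (x : point),
      derivable_pt_lim (fun h => D l (upd x v h)) (x v) (D (v :: l) x)) /\
  (forall l1 l2 : list var, Permutation l1 l2 -> D l1 = D l2).

(* Formal power series in two variables X, Y: coefficient of X^m Y^n. *)
Definition ser := nat -> nat -> R.

Definition sadd (f g : ser) : ser := fun m n => f m n + g m n.
Definition sopp (f : ser) : ser := fun m n => - f m n.
Definition ssub (f g : ser) : ser := fun m n => f m n - g m n.
Definition smul (f g : ser) : ser :=
  fun m n => sum_f_R0 (fun i => sum_f_R0 (fun k => f i k * g (m - i)%nat (n - k)%nat) n) m.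
Definition sconst (c : R) : ser :=
  fun m n => match m, n with O, O => c | _, _ => 0 end.
Definition sone : ser := sconst 1.
Definition sX : ser := fun m n => match m, n with 1%nat, O => 1 | _, _ => 0 end.
Definition sY : ser := fun m n => match m, n with O, 1%nat => 1 | _, _ => 0 end.

Fixpoint spow (f : ser) (k : nat) : ser :=
  match k with O => sone | S k' => smul f (spow f k') end.

Definition snocst (f : ser) : ser :=
  fun m n => match m, n with O, O => 0 | _, _ => f m n end.

(* Formal exponential: e^{c + g} = e^c * sum_k g^k / k!, (g without constant
   term; only k <= m+n contributes to the coefficient of X^m Y^n). *)
Definition sexp (f : ser) : ser :=
  fun m n => exp (f O O) *
    sum_f_R0 (fun k => spow (snocst f) k m n / INR (fact k)) (m + n).

Definition inX (a : nat -> R) : ser := fun m n => match n with O => a m | _ => 0 end.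
Definition inY (a : nat -> R) : ser := fun m n => match m with O => a n | _ => 0 end.

(* Jets: j l = (iterated partial derivative along l of F) at a point. *)
Definition jet := list var -> R.

(* Coefficients of D(z) applied to (d_l F):  sum_{n>=1} z^{-n}/n d_{t_n} d_l F
   (resp. Dbar with tbar and z^n).  fam k = variable number k+1. *)
Definition Dop1 (j : jet) (fam : nat -> var) (l : list var) : nat -> R :=
  fun m => match m with O => 0 | S k => j (fam k :: l) / INR (S k) end.

Definition Dop2 (j : jet) (famx famy : nat -> var) : ser :=
  fun m n => match m, n with
             | S a, S b => j (famx a :: famy b :: nil) / (INR (S a) * INR (S b))
             | _, _ => 0 end.

Definition DX (j : jet) (fam : nat -> var) (l : list var) : ser := inX (Dop1 j fam l).
Definition DY (j : jet) (fam : nat -> var) (l : list var) : ser := inY (Dop1 j fam l).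
Definition C (j : jet) (l : list var) : ser := sconst (j l).

(* Conventions: in (dH1a,b) X = lambda^{-1}, Y = mu^{-1}; in (dH2a,b) X = lambda,
   Y = mu; in (dH3a),(dH3b) X = lambda^{-1}, Y = mu; in (dH1c) X = lambda^{-1};
   in (dH2c) X = lambda.  Denominators (lambda - mu), etc., are cleared by
   multiplying with a nonzero polynomial. *)

(* (dH1a) times (Y-X) *)
Definition dH1a (j : jet) : Prop :=
  smul (ssub sY sX) (sexp (Dop2 j vt vt)) =
  sadd (ssub (smul sY (sexp (sopp (DX j vt (vr :: nil)))))
             (smul sX (sexp (sopp (DY j vt (vr :: nil))))))
       (smul (smul sX sY) (smul (ssub sY sX)
          (sexp (sadd (sadd (sadd (sadd (C j (vs :: vs :: nil)) (DX j vt (vs :: nil)))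
                                  (DY j vt (vs :: nil)))
                            (Dop2 j vt vt))
                      (C j (vr :: vs :: nil)))))).

Definition dH1b (j : jet) : Prop :=
  smul (ssub sY sX) (sexp (Dop2 j vt vt)) =
  sadd (ssub (smul sY (sexp (sopp (DX j vt (vs :: nil)))))
             (smul sX (sexp (sopp (DY j vt (vs :: nil))))))
       (smul (smul sX sY) (smul (ssub sY sX)
          (sexp (sadd (sadd (sadd (sadd (C j (vr :: vr :: nil)) (DX j vt (vr :: nil)))
                                  (DY j vt (vr :: nil)))
                            (Dop2 j vt vt))
                      (C j (vr :: vs :: nil)))))).

Definition dH2a (j : jet) : Prop :=
  smul (ssub sY sX) (sexp (Dop2 j vtb vtb)) =
  sadd (ssub (smul sY (sexp (sopp (DX j vtb (vr :: nil)))))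
             (smul sX (sexp (sopp (DY j vtb (vr :: nil))))))
       (smul (smul sX sY) (smul (ssub sY sX)
          (sexp (ssub (sadd (ssub (ssub (C j (vs :: vs :: nil)) (DX j vtb (vs :: nil)))
                                  (DY j vtb (vs :: nil)))
                            (Dop2 j vtb vtb))
                      (C j (vr :: vs :: nil)))))).

Definition dH2b (j : jet) : Prop :=
  smul (ssub sY sX) (sexp (Dop2 j vtb vtb)) =
  sadd (ssub (smul sY (sexp (DX j vtb (vs :: nil))))
             (smul sX (sexp (DY j vtb (vs :: nil)))))
       (smul (smul sX sY) (smul (ssub sY sX)
          (sexp (ssub (sadd (sadd (sadd (C j (vr :: vr :: nil)) (DX j vtb (vr :: nil)))
                                  (DY j vtb (vr :: nil)))
                            (Dop2 j vtb vtb))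
                      (C j (vr :: vs :: nil)))))).

(* (dH3a) times X  (lambda mu = Y/X) *)
Definition dH3a (j : jet) : Prop :=
  smul sX (sexp (Dop2 j vt vtb)) =
  sadd (ssub (smul sX (sexp (sopp (sadd (DY j vtb (vr :: nil)) (DY j vtb (vs :: nil))))))
             (smul sY (sexp (sopp (sadd (sadd (DX j vt (vr :: nil)) (DY j vtb (vs :: nil)))
                                        (C j (vr :: vs :: nil)))))))
       (smul sY (sexp
          (ssub (sadd (ssub (ssub (C j (vs :: vs :: nil)) (DX j vt (vs :: nil)))
                            (DY j vtb (vs :: nil)))
                      (Dop2 j vt vtb))
                (sadd (C j (vr :: vs :: nil)) (C j (vs :: vs :: nil)))))).

(* (dH3b)  (mu/lambda = X Y) *)
Definition dH3b (j : jet) : Prop :=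
  sexp (Dop2 j vt vtb) =
  sadd (ssub sone (smul (smul sX sY)
                    (sexp (ssub (sadd (C j (vs :: vs :: nil)) (DX j vt (vs :: nil)))
                                (DY j vtb (vs :: nil))))))
       (smul (smul sX sY)
          (sexp (sadd (sadd (sadd (C j (vr :: vr :: nil)) (DX j vt (vr :: nil)))
                            (DY j vtb (vr :: nil)))
                      (Dop2 j vt vtb)))).

(* (dH1c) times X *)
Definition dH1c (j : jet) : Prop :=
  sadd (ssub (sexp (sopp (DX j vt (vs :: nil)))) (sexp (sopp (DX j vt (vr :: nil)))))
       (smul (smul sX sX)
          (ssub (sexp (sadd (sadd (C j (vs :: vr :: nil)) (C j (vs :: vs :: nil)))
                            (DX j vt (vs :: nil))))
                (sexp (sadd (sadd (C j (vr :: vr :: nil)) (C j (vr :: vs :: nil)))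
                            (DX j vt (vr :: nil)))))) =
  smul sX (sconst (j (vr :: vt 0 :: nil) - j (vs :: vt 0 :: nil))).

(* (dH2c) times X *)
Definition dH2c (j : jet) : Prop :=
  sadd (ssub (sexp (DX j vtb (vs :: nil))) (sexp (sopp (DX j vtb (vr :: nil)))))
       (smul (smul sX sX)
          (ssub (sexp (sopp (sadd (ssub (C j (vs :: vr :: nil)) (C j (vs :: vs :: nil)))
                                  (DX j vtb (vs :: nil)))))
                (sexp (sadd (ssub (C j (vr :: vr :: nil)) (C j (vr :: vs :: nil)))
                            (DX j vtb (vr :: nil)))))) =
  smul sX (sconst (j (vr :: vtb 0 :: nil) + j (vs :: vtb 0 :: nil))).

Definition dH3c (j : jet) : Prop :=
  j (vr :: vtb 0 :: nil) + j (vs :: vtb 0 :: nil) =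
  exp (- j (vr :: vs :: nil)) * (j (vr :: vt 0 :: nil) - j (vs :: vt 0 :: nil)).

Definition jet_at (D : list var -> point -> R) (x : point) : jet := fun l => D l x.

(* Main.v *)
From Stdlib Require Import Reals Lra Lia Permutation List FunctionalExtensionality Ring Factorial.
Require Import Defs.
Open Scope R_scope.

Record SR := mkSR {
  car :> Type;
  ra : car -> car -> car;
  rm : car -> car -> car;
  rz : car;
  ro : car;
  ra_comm : forall x y, ra x y = ra y x;
  ra_assoc : forall x y z, ra x (ra y z) = ra (ra x y) z;
  ra_0 : forall x, ra rz x = x;
  rm_comm : forall x y, rm x y = rm y x;
  rm_assoc : forall x y z, rm x (rm y z) = rm (rm x y) z;
  rm_1 : forall x, rm ro x = x;
  rm_0 : forall x, rm rz x = rz;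
  rm_distr : forall x y z, rm x (ra y z) = ra (rm x y) (rm x z)
}.

Section Gen.
Variable K : SR.
Notation "x + y" := (ra K x y).
Notation "x * y" := (rm K x y).

Fixpoint gsum (F : nat -> K) (N : nat) : K :=
  match N with O => F O | S n => gsum F n + F (S n) end.

Lemma gsum_ext F G N : (forall i, (i <= N)%nat -> F i = G i) -> gsum F N = gsum G N.
Proof. induction N; intros H; simpl. apply H; lia. rewrite IHN, (H (S N)); auto; intros; apply H; lia. Qed.

Lemma ra_swap4 (a b c d : K) : (a + b) + (c + d) = (a + c) + (b + d).
Proof.
  rewrite <- !ra_assoc. f_equal. rewrite !ra_assoc. f_equal. apply ra_comm.
Qed.

Lemma gsum_add F G N : gsum (fun i => F i + G i) N = gsum F N + gsum G N.
Proof.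
  induction N; simpl. reflexivity. rewrite IHN. apply ra_swap4.
Qed.

Lemma gsum_mul_l a F N : a * gsum F N = gsum (fun i => a * F i) N.
Proof. induction N; simpl. reflexivity. rewrite rm_distr, IHN. reflexivity. Qed.

Lemma rm_0r x : x * rz K = rz K.
Proof. rewrite rm_comm; apply rm_0. Qed.
Lemma ra_0r x : x + rz K = x.
Proof. rewrite ra_comm; apply ra_0. Qed.

Lemma gsum_mul_r a F N : gsum F N * a = gsum (fun i => F i * a) N.
Proof. rewrite rm_comm, gsum_mul_l. apply gsum_ext; intros; apply rm_comm. Qed.

Lemma gsum_zero F N : (forall i, (i <= N)%nat -> F i = rz K) -> gsum F N = rz K.
Proof. induction N; intros H; simpl. apply H; lia. rewrite IHN, H; [apply ra_0|lia|intros; apply H; lia]. Qed.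

Lemma gsum_shift F N : gsum F (S N) = F O + gsum (fun i => F (S i)) N.
Proof.
  induction N. reflexivity.
  change (gsum F (S (S N))) with (gsum F (S N) + F (S (S N))). rewrite IHN.
  simpl. apply eq_sym, ra_assoc.
Qed.

Lemma gsum_rev F N : gsum F N = gsum (fun i => F (N - i)%nat) N.
Proof.
  revert F; induction N; intros F. reflexivity.
  rewrite gsum_shift. simpl gsum at 2.
  rewrite (IHN (fun i => F (S i))). rewrite ra_comm. f_equal.
  - apply gsum_ext; intros i Hi. f_equal. destruct i; lia.
  - f_equal; lia.
Qed.

Lemma gsum_single F N k : (k <= N)%nat -> (forall i, (i <= N)%nat -> i <> k -> F i = rz K) ->
  gsum F N = F k.
Proof.
  induction N; intros Hk H; simpl.
  - f_equal; lia.
  - destruct (Nat.eq_dec k (S N)) as [->|Hne].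
    + rewrite gsum_zero. apply ra_0. intros; apply H; lia.
    + rewrite IHN, (H (S N)); [apply ra_0r|lia|lia|lia|intros; apply H; lia].
Qed.

Lemma gsum_tri (H : nat -> nat -> K) m :
  gsum (fun i => gsum (fun j => H i j) i) m =
  gsum (fun j => gsum (fun l => H (j + l)%nat j) (m - j)) m.
Proof.
  induction m. reflexivity.
  change (gsum (fun i => gsum (fun j => H i j) i) (S m)) with
    (gsum (fun i => gsum (fun j => H i j) i) m + gsum (fun j => H (S m) j) (S m)).
  rewrite IHm.
  change (gsum (fun j => gsum (fun l => H (j + l)%nat j) (S m - j)) (S m)) with
    (gsum (fun j => gsum (fun l => H (j + l)%nat j) (S m - j)) m +
     gsum (fun l => H (S m + l)%nat (S m)) (S m - S m)).
  replace (S m - S m)%nat with O by lia.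
  change (gsum (fun l => H (S m + l)%nat (S m)) O) with (H (S m + 0)%nat (S m)).
  rewrite Nat.add_0_r.
  rewrite (gsum_ext (fun j => gsum (fun l => H (j + l)%nat j) (S m - j))
                    (fun j => gsum (fun l => H (j + l)%nat j) (m - j) + H (S m) j)).
  2:{ intros i Hi. replace (S m - i)%nat with (S (m - i)) by lia.
      change (gsum (fun l => H (i + l)%nat i) (S (m - i))) with
        (gsum (fun l => H (i + l)%nat i) (m - i) + H (i + S (m - i))%nat i).
      f_equal. f_equal. lia. }
  rewrite gsum_add.
  change (gsum (fun j => H (S m) j) (S m)) with (gsum (fun j => H (S m) j) m + H (S m) (S m)).
  rewrite ra_assoc. reflexivity.
Qed.

Lemma gsum_swap (H : nat -> nat -> K) m n :
  gsum (fun i => gsum (fun k => H i k) n) m = gsum (fun k => gsum (fun i => H i k) m) n.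
Proof.
  induction m; simpl. reflexivity.
  rewrite IHm, <- gsum_add. reflexivity.
Qed.

Definition conv (a b : nat -> K) (m : nat) : K := gsum (fun i => a i * b (m - i)%nat) m.

Lemma conv_comm a b m : conv a b m = conv b a m.
Proof.
  unfold conv. rewrite gsum_rev. apply gsum_ext; intros i Hi.
  rewrite rm_comm. f_equal. f_equal. lia.
Qed.

Lemma conv_assoc a b c m : conv a (conv b c) m = conv (conv a b) c m.
Proof.
  unfold conv.
  rewrite (gsum_ext (fun i => gsum (fun j => a j * b (i - j)%nat) i * c (m - i)%nat)
                    (fun i => gsum (fun j => a j * b (i - j)%nat * c (m - i)%nat) i)).
  2:{ intros; apply gsum_mul_r. }
  rewrite (gsum_tri (fun i j => a j * b (i - j)%nat * c (m - i)%nat)).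
  apply gsum_ext; intros j Hj. rewrite gsum_mul_l. apply gsum_ext; intros l Hl.
  rewrite rm_assoc. f_equal. f_equal. f_equal. lia. f_equal. lia.
Qed.

Lemma conv_distr a b c m : conv a (fun i => b i + c i) m = conv a b m + conv a c m.
Proof. unfold conv. rewrite <- gsum_add. apply gsum_ext; intros; apply rm_distr. Qed.

Definition cunit : nat -> K := fun i => match i with O => ro K | _ => rz K end.

Lemma conv_unit b m : conv cunit b m = b m.
Proof.
  unfold conv. rewrite (gsum_single _ m O). simpl. rewrite Nat.sub_0_r. apply rm_1. lia.
  intros i _ Hi. destruct i. lia. apply rm_0.
Qed.

Lemma conv_zero b m : conv (fun _ => rz K) b m = rz K.
Proof. unfold conv. apply gsum_zero; intros; apply rm_0. Qed.

Definition PS : SR.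
Proof.
  refine (mkSR (nat -> K) (fun a b i => a i + b i) conv (fun _ => rz K) cunit _ _ _ _ _ _ _ _);
  intros; apply functional_extensionality; intros.
  apply ra_comm. apply ra_assoc. apply ra_0. apply conv_comm. apply conv_assoc.
  apply conv_unit. apply conv_zero. apply conv_distr.
Defined.

End Gen.

Definition SR_R : SR.
Proof.
  refine (mkSR R Rplus Rmult 0 1 _ _ _ _ _ _ _ _); intros; ring.
Defined.

Lemma gsum_R F N : gsum SR_R F N = sum_f_R0 F N.
Proof. induction N; simpl; [reflexivity|]. rewrite <- IHN; reflexivity. Qed.

Definition S1 := PS SR_R.
Definition S2 := PS S1.

Lemma gsum_S1 (F : nat -> S1) N n : gsum S1 F N n = sum_f_R0 (fun i => F i n) N.
Proof. induction N; simpl; [reflexivity|]. rewrite <- IHN; reflexivity. Qed.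

Lemma smul_S2 (f g : ser) : smul f g = rm S2 f g.
Proof.
  apply functional_extensionality; intro m; apply functional_extensionality; intro n.
  unfold smul. simpl. unfold conv. rewrite gsum_S1. apply sum_eq; intros i _. unfold conv. symmetry. apply gsum_R.
Qed.

Definition szero : ser := fun _ _ => 0.

Ltac fext := let m := fresh "m" in let n := fresh "n" in
  apply functional_extensionality; intro m; apply functional_extensionality; intro n.

Lemma sone_S2 : sone = ro S2.
Proof. fext. destruct m, n; reflexivity. Qed.

Lemma sadd_S2 f g : sadd f g = ra S2 f g.
Proof. reflexivity. Qed.

Lemma ser_rt : ring_theory szero sone sadd smul ssub sopp (@eq ser).
Proof.
  constructor; intros.
  - fext. unfold sadd, szero. ring.
  - fext. unfold sadd. ring.
  - fext. unfold sadd. ring.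
  - rewrite smul_S2, sone_S2. apply (rm_1 S2).
  - rewrite !smul_S2. apply (rm_comm S2).
  - rewrite !smul_S2. apply (rm_assoc S2).
  - rewrite !smul_S2. rewrite (rm_comm S2), sadd_S2, (rm_distr S2), !(rm_comm S2 z). reflexivity.
  - fext. unfold ssub, sadd, sopp. ring.
  - fext. unfold sadd, sopp, szero. ring.
Qed.

Add Ring serRing : ser_rt.

Lemma sum_single_R F N k : (k <= N)%nat -> (forall i, (i <= N)%nat -> i <> k -> F i = 0) ->
  sum_f_R0 F N = F k.
Proof. intros; rewrite <- gsum_R. apply (gsum_single SR_R); auto. Qed.

Lemma sum_zero_R F N : (forall i, (i <= N)%nat -> F i = 0) -> sum_f_R0 F N = 0.
Proof. intros; rewrite <- gsum_R. apply (gsum_zero SR_R); auto. Qed.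

Lemma smul_const_l c f m n : smul (sconst c) f m n = c * f m n.
Proof.
  unfold smul. rewrite (sum_single_R _ m O) by (lia || (intros i _ Hi;
    apply sum_zero_R; intros k _; destruct i; [lia|simpl; ring])).
  rewrite (sum_single_R _ n O) by (lia || (intros k _ Hk; destruct k; [lia|simpl; ring])).
  simpl. rewrite !Nat.sub_0_r. reflexivity.
Qed.

Lemma smul_X_l f m n : smul sX f m n = match m with O => 0 | S m' => f m' n end.
Proof.
  unfold smul. destruct m as [|m'].
  - apply sum_zero_R. intros i Hi. apply sum_zero_R; intros k _. replace i with O by lia.
    simpl. ring.
  - rewrite (sum_single_R _ (S m') 1%nat) by (lia || (intros i _ Hi;
      apply sum_zero_R; intros k _; destruct i as [|[|i]]; [simpl; ring|lia|simpl; ring])).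
    rewrite (sum_single_R _ n O) by (lia || (intros k _ Hk; destruct k; [lia|simpl; ring])).
    simpl. rewrite !Nat.sub_0_r. ring.
Qed.

Lemma smul_Y_l f m n : smul sY f m n = match n with O => 0 | S n' => f m n' end.
Proof.
  unfold smul. rewrite (sum_single_R _ m O) by (lia || (intros i _ Hi;
    apply sum_zero_R; intros k _; destruct i; [lia|simpl; ring])).
  rewrite Nat.sub_0_r. destruct n as [|n'].
  - apply sum_zero_R. intros k Hk. replace k with O by lia. simpl. ring.
  - rewrite (sum_single_R _ (S n') 1%nat) by (lia || (intros k _ Hk;
      destruct k as [|[|k]]; [simpl; ring|lia|simpl; ring])).
    simpl. rewrite Nat.sub_0_r. ring.
Qed.

Lemma sconst_mul a b : sconst (a * b) = smul (sconst a) (sconst b).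
Proof. fext. rewrite smul_const_l. destruct m, n; simpl; ring. Qed.

Lemma sconst_add a b : sconst (a + b) = sadd (sconst a) (sconst b).
Proof. fext. unfold sadd. destruct m, n; simpl; ring. Qed.

Lemma sconst_opp a : sconst (- a) = sopp (sconst a).
Proof. fext. unfold sopp. destruct m, n; simpl; ring. Qed.

Lemma sconst_sub a b : sconst (a - b) = ssub (sconst a) (sconst b).
Proof. fext. unfold ssub. destruct m, n; simpl; ring. Qed.

Lemma ssub_sadd f g : ssub f g = sadd f (sopp g).
Proof. reflexivity. Qed.

Lemma sopp_sadd f g : sopp (sadd f g) = sadd (sopp f) (sopp g).
Proof. fext. unfold sopp, sadd. ring. Qed.

Lemma sopp_sopp f : sopp (sopp f) = f.
Proof. fext. unfold sopp. ring. Qed.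

Lemma cancel_X f g : smul sX f = smul sX g -> f = g.
Proof.
  intros H. fext. assert (H1 := f_equal (fun h => h (S m) n) H). simpl in H1.
  rewrite !smul_X_l in H1. exact H1.
Qed.

Lemma cancel_Y f g : smul sY f = smul sY g -> f = g.
Proof.
  intros H. fext. assert (H1 := f_equal (fun h => h m (S n)) H). simpl in H1.
  rewrite !smul_Y_l in H1. exact H1.
Qed.

Lemma cancel_1mX E D : smul (ssub sone (smul sX E)) D = szero -> D = szero.
Proof.
  intros H. assert (HD : D = smul sX (smul E D)).
  { transitivity (sadd (smul (ssub sone (smul sX E)) D) (smul sX (smul E D))).
    ring. rewrite H. ring. }
  fext. revert n. induction m as [m IH] using (well_founded_induction Wf_nat.lt_wf). intro n.
  rewrite HD, smul_X_l. destruct m as [|m']. reflexivity.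
  unfold smul. apply sum_zero_R; intros i Hi. apply sum_zero_R; intros k Hk.
  rewrite IH by lia. unfold szero. ring.
Qed.

Lemma cancel_1mX_eq E A B : smul (ssub sone (smul sX E)) A = smul (ssub sone (smul sX E)) B -> A = B.
Proof.
  intros H. assert (ssub A B = szero).
  { apply (cancel_1mX E). transitivity (ssub (smul (ssub sone (smul sX E)) A) (smul (ssub sone (smul sX E)) B)).
    ring. rewrite H. ring. }
  transitivity (sadd (ssub A B) B). ring. rewrite H0. ring.
Qed.

Definition ssum (F : nat -> ser) (N : nat) : ser := gsum S2 F N.

Lemma ssum_coef F N m n : ssum F N m n = sum_f_R0 (fun k => F k m n) N.
Proof. induction N; simpl; [reflexivity|]. unfold ssum in *. simpl. rewrite <- IHN. reflexivity. Qed.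

Lemma ssum_smul_l a F N : smul a (ssum F N) = ssum (fun i => smul a (F i)) N.
Proof.
  unfold ssum. rewrite smul_S2, (gsum_mul_l S2). apply (gsum_ext S2); intros; rewrite smul_S2; reflexivity.
Qed.

Lemma ssum_add F G N : ssum (fun i => sadd (F i) (G i)) N = sadd (ssum F N) (ssum G N).
Proof. unfold ssum. apply (gsum_add S2). Qed.

Lemma ssum_ext F G N : (forall i, (i <= N)%nat -> F i = G i) -> ssum F N = ssum G N.
Proof. unfold ssum; apply (gsum_ext S2). Qed.

Lemma ssum_shift F N : ssum F (S N) = sadd (F O) (ssum (fun i => F (S i)) N).
Proof. unfold ssum. apply (gsum_shift S2). Qed.

Lemma ssum_S F N : ssum F (S N) = sadd (ssum F N) (F (S N)).
Proof. reflexivity. Qed.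

Definition sc (c : R) (f : ser) : ser := smul (sconst c) f.

Definition G (g : ser) (i : nat) : ser := sc (/ INR (fact i)) (spow g i).

Lemma fact_pos k : INR (fact k) <> 0.
Proof. apply not_0_INR. apply fact_neq_0. Qed.

Lemma G_succ g i : smul g (G g i) = sc (INR (S i)) (G g (S i)).
Proof.
  unfold G, sc. simpl spow.
  transitivity (smul (sconst (INR (S i) * / INR (fact (S i)))) (smul g (spow g i))).
  - transitivity (smul (sconst (/ INR (fact i))) (smul g (spow g i))). ring.
    f_equal. f_equal. rewrite fact_simpl, mult_INR. field. split. apply fact_pos. apply not_0_INR; lia.
  - rewrite sconst_mul. ring.
Qed.

Lemma sc_add a b f : sadd (sc a f) (sc b f) = sc (a + b) f.
Proof. unfold sc. rewrite sconst_add. ring. Qed.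

Lemma sc_mul a b f : sc a (sc b f) = sc (a * b) f.
Proof. unfold sc. rewrite sconst_mul. ring. Qed.

Lemma sc_1 f : sc 1 f = f.
Proof. unfold sc. change (sconst 1) with sone. ring. Qed.

Lemma sc_0 f : sc 0 f = szero.
Proof. unfold sc. fext. rewrite smul_const_l. unfold szero. ring. Qed.

Lemma expbin g h k :
  sc (/ INR (fact k)) (spow (sadd g h) k) = ssum (fun i => smul (G g i) (G h (k - i))) k.
Proof.
  induction k.
  - simpl. unfold G. simpl. replace (/ 1) with 1 by field. rewrite !sc_1. ring.
  - assert (E : sc (/ INR (fact (S k))) (spow (sadd g h) (S k)) =
                sc (/ INR (S k)) (smul (sadd g h) (sc (/ INR (fact k)) (spow (sadd g h) k)))).
    { simpl spow. rewrite fact_simpl, mult_INR. unfold sc.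
      rewrite Rinv_mult, sconst_mul. ring. }
    rewrite E, IHk. clear E IHk.
    assert (E2 : smul (sadd g h) (ssum (fun i => smul (G g i) (G h (k - i))) k) =
       sadd (ssum (fun i => sc (INR i) (smul (G g i) (G h (S k - i)))) (S k))
            (ssum (fun i => sc (INR (S k - i)) (smul (G g i) (G h (S k - i)))) (S k))).
    { rewrite ssum_smul_l.
      rewrite (ssum_ext _ (fun i => sadd (smul (smul g (G g i)) (G h (k - i)))
                                         (smul (G g i) (smul h (G h (k - i)))))).
      2:{ intros; ring. }
      rewrite ssum_add. f_equal.
      - rewrite ssum_shift. simpl INR at 1. rewrite sc_0.
        transitivity (sadd szero (ssum (fun i => sc (INR (S i)) (smul (G g (S i)) (G h (S k - S i)))) k)).
        2:{ reflexivity. }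
        rewrite (ssum_ext _ (fun i => sc (INR (S i)) (smul (G g (S i)) (G h (S k - S i))))). ring.
        intros i Hi. rewrite G_succ. unfold sc. replace (S k - S i)%nat with (k - i)%nat by lia. ring.
      - rewrite ssum_S. replace (S k - S k)%nat with O by lia. simpl INR at 2. rewrite sc_0.
        rewrite (ssum_ext _ (fun i => sc (INR (S k - i)) (smul (G g i) (G h (S k - i))))). ring.
        intros i Hi. rewrite G_succ. unfold sc. replace (S k - i)%nat with (S (k - i)) by lia. ring. }
    rewrite E2, <- ssum_add.
    rewrite (ssum_ext _ (fun i => sc (INR (S k)) (smul (G g i) (G h (S k - i))))).
    2:{ intros i Hi. rewrite sc_add. f_equal. rewrite <- plus_INR. f_equal. lia. }
    unfold sc at 1. rewrite ssum_smul_l.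
    apply ssum_ext; intros i Hi. unfold sc.
    transitivity (smul (smul (sconst (/ INR (S k))) (sconst (INR (S k)))) (smul (G g i) (G h (S k - i)))).
    ring. rewrite <- sconst_mul, Rinv_l. change (sconst 1) with sone; ring. apply not_0_INR; lia.
Qed.

Definition low (N : nat) (f : ser) := forall m n, (m + n < N)%nat -> f m n = 0.

Lemma low_mul a b f g : low a f -> low b g -> low (a + b) (smul f g).
Proof.
  intros Hf Hg m n H. unfold smul. apply sum_zero_R; intros i Hi. apply sum_zero_R; intros k Hk.
  destruct (Compare_dec.lt_dec (i + k) a) as [L|L].
  - rewrite Hf by lia. ring.
  - rewrite (Hg (m - i)%nat (n - k)%nat) by lia. ring.
Qed.

Lemma low_sc a c f : low a f -> low a (sc c f).
Proof. intros Hf m n H. unfold sc. rewrite smul_const_l, Hf by lia. ring. Qed.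

Lemma low_pow g k : low 1 g -> low k (spow g k).
Proof.
  intros Hg. induction k. intros m n H; lia.
  simpl. replace (S k) with (1 + k)%nat by lia. apply low_mul; auto.
Qed.

Lemma low_G g k : low 1 g -> low k (G g k).
Proof. intros; apply low_sc, low_pow; auto. Qed.

Lemma low1_snocst f : low 1 (snocst f).
Proof. intros m n H. destruct m, n; try lia. reflexivity. Qed.

Lemma sum_mul_R c F N : c * sum_f_R0 F N = sum_f_R0 (fun i => c * F i) N.
Proof. rewrite <- !gsum_R. apply (gsum_mul_l SR_R). Qed.

Lemma sum_trunc F M N : (M <= N)%nat -> (forall k, (M < k <= N)%nat -> F k = 0) ->
  sum_f_R0 F N = sum_f_R0 F M.
Proof.
  induction N; intros H1 H2.
  - replace M with O by lia. reflexivity.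
  - destruct (Nat.eq_dec M (S N)) as [->|Hne]. reflexivity.
    simpl. rewrite IHN by (lia || (intros; apply H2; lia)). rewrite H2 by lia. ring.
Qed.

Definition ES N g := ssum (G g) N.

Lemma G_coef g k m n : G g k m n = spow g k m n / INR (fact k).
Proof. unfold G, sc. rewrite smul_const_l. unfold Rdiv. ring. Qed.

Lemma sexp_ES f N m n : (m + n <= N)%nat -> sexp f m n = exp (f O O) * ES N (snocst f) m n.
Proof.
  intros H. unfold sexp, ES. f_equal. rewrite ssum_coef.
  rewrite (sum_trunc _ (m + n) N); auto.
  - apply sum_eq; intros; rewrite G_coef; reflexivity.
  - intros k Hk. rewrite G_coef, (low_pow (snocst f) k) by (apply low1_snocst || lia). unfold Rdiv; ring.
Qed.

Lemma ssum_smul_r a F N : smul (ssum F N) a = ssum (fun i => smul (F i) a) N.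
Proof.
  transitivity (smul a (ssum F N)). ring. rewrite ssum_smul_l. apply ssum_ext; intros; ring.
Qed.

Lemma ES_add g h N m n : low 1 g -> low 1 h -> (m + n <= N)%nat ->
  ES N (sadd g h) m n = smul (ES N g) (ES N h) m n.
Proof.
  intros Hg Hh HN. unfold ES.
  rewrite (ssum_ext _ (fun k => ssum (fun i => smul (G g i) (G h (k - i))) k)).
  2:{ intros; apply expbin. }
  unfold ssum at 1. rewrite (gsum_tri S2 (fun k i => smul (G g i) (G h (k - i)))).
  rewrite ssum_smul_r.
  rewrite (ssum_ext (fun i => smul (G g i) (ssum (G h) N)) (fun i => ssum (fun l => smul (G g i) (G h l)) N)).
  2:{ intros; apply ssum_smul_l. }
  change (gsum S2 ?F ?N) with (ssum F N).
  rewrite !ssum_coef. apply sum_eq; intros j Hj.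
  change (gsum S2 ?F ?N) with (ssum F N). rewrite !ssum_coef.
  rewrite (sum_eq (fun k => smul (G g j) (G h (j + k - j)) m n) (fun k => smul (G g j) (G h k) m n)).
  2:{ intros. replace (j + i - j)%nat with i by lia. reflexivity. }
  symmetry. apply sum_trunc. lia.
  intros l Hl. apply (low_mul j l). apply low_G; auto. apply low_G; auto. lia.
Qed.

Lemma snocst_add f g : snocst (sadd f g) = sadd (snocst f) (snocst g).
Proof. fext. unfold sadd. destruct m, n; simpl; try ring; reflexivity. Qed.

Lemma sexp_add f g : sexp (sadd f g) = smul (sexp f) (sexp g).
Proof.
  fext. rewrite (sexp_ES _ (m + n)) by lia. rewrite snocst_add.
  rewrite ES_add by (apply low1_snocst || lia).
  unfold sadd at 1. rewrite exp_plus.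
  unfold smul. rewrite !sum_mul_R. apply sum_eq; intros i Hi.
  rewrite !sum_mul_R. apply sum_eq; intros k Hk.
  rewrite (sexp_ES f (m + n)) by lia. rewrite (sexp_ES g (m + n)) by lia. ring.
Qed.

Lemma spow_szero k : spow szero (S k) = szero.
Proof. simpl. ring. Qed.

Lemma snocst_const c : snocst (sconst c) = szero.
Proof. fext. destruct m, n; reflexivity. Qed.

Lemma sexp_const c : sexp (sconst c) = sconst (exp c).
Proof.
  fext. unfold sexp. rewrite snocst_const.
  rewrite (sum_single_R _ _ O) by (lia || (intros i _ Hi; destruct i; [lia|rewrite spow_szero; unfold szero, Rdiv; ring])).
  simpl. destruct m, n; simpl; field.
Qed.

Lemma szero_const : szero = sconst 0.
Proof. fext. destruct m, n; reflexivity. Qed.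

Lemma sexp_inv f : smul (sexp f) (sexp (sopp f)) = sone.
Proof.
  rewrite <- sexp_add. replace (sadd f (sopp f)) with (sconst 0).
  rewrite sexp_const, exp_0. reflexivity.
  rewrite <- szero_const. ring.
Qed.

Lemma sexp_10 f : sexp f 1%nat O = exp (f O O) * f 1%nat O.
Proof.
  unfold sexp. simpl. f_equal. unfold smul. simpl. field.
Qed.

Definition xonly (f : ser) := forall m n, n <> O -> f m n = 0.

Lemma xonly_mul f g : xonly f -> xonly g -> xonly (smul f g).
Proof.
  intros Hf Hg m n Hn. unfold smul. apply sum_zero_R; intros i Hi. apply sum_zero_R; intros k Hk.
  destruct k. rewrite (Hg (m - i)%nat) by lia. ring. rewrite Hf by lia. ring.
Qed.

Lemma xonly_add f g : xonly f -> xonly g -> xonly (sadd f g).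
Proof. intros Hf Hg m n Hn. unfold sadd. rewrite Hf, Hg by auto. ring. Qed.
Lemma xonly_sub f g : xonly f -> xonly g -> xonly (ssub f g).
Proof. intros Hf Hg m n Hn. unfold ssub. rewrite Hf, Hg by auto. ring. Qed.
Lemma xonly_opp f : xonly f -> xonly (sopp f).
Proof. intros Hf m n Hn. unfold sopp. rewrite Hf by auto. ring. Qed.
Lemma xonly_const c : xonly (sconst c).
Proof. intros m n Hn. destruct m, n; try lia; reflexivity. Qed.
Lemma xonly_X : xonly sX.
Proof. intros m n Hn. destruct m as [|[|]], n; try lia; reflexivity. Qed.
Lemma xonly_inX a : xonly (inX a).
Proof. intros m n Hn. destruct n; try lia; reflexivity. Qed.
Lemma xonly_pow g k : xonly g -> xonly (spow g k).
Proof. intros Hg; induction k; simpl. apply xonly_const. apply xonly_mul; auto. Qed.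
Lemma xonly_exp f : xonly f -> xonly (sexp f).
Proof.
  intros Hf m n Hn. unfold sexp. rewrite sum_zero_R. ring.
  intros k _. rewrite xonly_pow; auto. unfold Rdiv; ring.
  intros a b Hb. destruct a, b; try lia; simpl; apply Hf; auto.
Qed.

Definition sswap (f : ser) : ser := fun m n => f n m.

Lemma sum_swap_R (H : nat -> nat -> R) m n :
  sum_f_R0 (fun i => sum_f_R0 (fun k => H i k) n) m = sum_f_R0 (fun k => sum_f_R0 (fun i => H i k) m) n.
Proof. exact (gsum_swap SR_R H m n). Qed.

Lemma sswap_mul f g : sswap (smul f g) = smul (sswap f) (sswap g).
Proof.
  fext. unfold sswap, smul.
  rewrite (sum_swap_R (fun i k => f i k * g (n - i)%nat (m - k)%nat)). reflexivity.
Qed.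

Lemma sswap_one : sswap sone = sone.
Proof. fext. unfold sswap. destruct m, n; reflexivity. Qed.

Lemma sswap_pow g k : sswap (spow g k) = spow (sswap g) k.
Proof. induction k; simpl. apply sswap_one. rewrite sswap_mul, IHk. reflexivity. Qed.

Lemma sswap_exp f : sswap (sexp f) = sexp (sswap f).
Proof.
  fext. unfold sexp, sswap at 1. rewrite Nat.add_comm.
  replace (snocst (sswap f)) with (sswap (snocst f)).
  2:{ fext. unfold sswap. destruct m0, n0; reflexivity. }
  apply f_equal2. reflexivity. apply sum_eq; intros. rewrite <- sswap_pow. reflexivity.
Qed.

Lemma sswap_add f g : sswap (sadd f g) = sadd (sswap f) (sswap g).
Proof. reflexivity. Qed.
Lemma sswap_sub f g : sswap (ssub f g) = ssub (sswap f) (sswap g).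
Proof. reflexivity. Qed.
Lemma sswap_opp f : sswap (sopp f) = sopp (sswap f).
Proof. reflexivity. Qed.
Lemma sswap_const c : sswap (sconst c) = sconst c.
Proof. fext. unfold sswap. destruct m, n; reflexivity. Qed.
Lemma sswap_X : sswap sX = sY.
Proof. fext. unfold sswap. destruct m as [|[|]], n as [|[|]]; reflexivity. Qed.
Lemma sswap_DX j fam l : sswap (DX j fam l) = DY j fam l.
Proof. reflexivity. Qed.

Lemma extract h : xonly h -> smul sY h = smul sX (sswap h) -> h = smul sX (sconst (h 1%nat O)).
Proof.
  intros Hx H. fext. rewrite smul_X_l.
  destruct n. 2:{ rewrite Hx by lia. destruct m; [reflexivity|]. destruct m, n; reflexivity. }
  assert (H1 := f_equal (fun f => f m 1%nat) H). simpl in H1.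
  rewrite smul_Y_l, smul_X_l in H1. rewrite H1.
  destruct m as [|m]. reflexivity. unfold sswap. destruct m. reflexivity.
  rewrite Hx by lia. reflexivity.
Qed.

Local Infix "*s" := smul (at level 40, left associativity).
Local Infix "+s" := sadd (at level 50, left associativity).
Local Infix "-s" := ssub (at level 50, left associativity).

Lemma L12 (Q A A' B B' U U' V V' ks kr : ser) :
  A *s U = sone -> A' *s U' = sone -> B *s V = sone -> B' *s V' = sone ->
  (sY -s sX) *s Q = (sY *s A -s sX *s A') +s sX *s sY *s (sY -s sX) *s (kr *s V *s V' *s Q) ->
  ((sY -s sX) *s Q = (sY *s B -s sX *s B') +s sX *s sY *s (sY -s sX) *s (ks *s U *s U' *s Q) <->
   sY *s ((A -s B) +s sX *s (sX *s (ks *s U -s kr *s V))) =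
   sX *s ((A' -s B') +s sY *s (sY *s (ks *s U' -s kr *s V')))).
Proof.
  intros HA HA' HB HB' Hb.
  set (W := sone -s sX *s (sY *s kr *s V *s V')).
  set (Z := sone -s sX *s (sY *s ks *s U *s U')).
  assert (Iden : (sY *s A -s sX *s A') *s Z -s (sY *s B -s sX *s B') *s W =
     sY *s ((A -s B) +s sX *s (sX *s (ks *s U -s kr *s V))) -s
     sX *s ((A' -s B') +s sY *s (sY *s (ks *s U' -s kr *s V')))).
  { assert (E : (sY *s A -s sX *s A') *s Z -s (sY *s B -s sX *s B') *s W =
     sY *s ((A -s B) +s sX *s (sX *s (ks *s U -s kr *s V))) -s
     sX *s ((A' -s B') +s sY *s (sY *s (ks *s U' -s kr *s V'))) -s
     sX *s sY *s sY *s ks *s U' *s (A *s U -s sone) +s sX *s sX *s sY *s ks *s U *s (A' *s U' -s sone)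
     +s sX *s sY *s sY *s kr *s V' *s (B *s V -s sone) -s sX *s sX *s sY *s kr *s V *s (B' *s V' -s sone))
     by (unfold W, Z; ring).
    rewrite E, HA, HA', HB, HB'. ring. }
  assert (HbW : (sY -s sX) *s Q *s W = sY *s A -s sX *s A').
  { transitivity ((sY -s sX) *s Q -s sX *s sY *s (sY -s sX) *s (kr *s V *s V' *s Q)).
    unfold W; ring. rewrite Hb. ring. }
  split.
  - intros Ha.
    assert (HaZ : (sY -s sX) *s Q *s Z = sY *s B -s sX *s B').
    { transitivity ((sY -s sX) *s Q -s sX *s sY *s (sY -s sX) *s (ks *s U *s U' *s Q)).
      unfold Z; ring. rewrite Ha. ring. }
    assert (D0 : (sY *s A -s sX *s A') *s Z -s (sY *s B -s sX *s B') *s W = szero).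
    { rewrite <- HbW, <- HaZ. ring. }
    rewrite Iden in D0.
    transitivity (sY *s ((A -s B) +s sX *s (sX *s (ks *s U -s kr *s V))) -s
     sX *s ((A' -s B') +s sY *s (sY *s (ks *s U' -s kr *s V'))) +s
     sX *s ((A' -s B') +s sY *s (sY *s (ks *s U' -s kr *s V')))). ring.
    rewrite D0. ring.
  - intros Hc.
    assert (HaZ : (sY -s sX) *s Q *s Z = sY *s B -s sX *s B').
    { apply (cancel_1mX_eq (sY *s kr *s V *s V')). fold W.
      transitivity ((sY *s A -s sX *s A') *s Z -s (sY *s B -s sX *s B') *s W +s W *s (sY *s B -s sX *s B')).
      rewrite <- HbW. ring. rewrite Iden, Hc. ring. }
    transitivity ((sY -s sX) *s Q *s Z +s sX *s sY *s (sY -s sX) *s (ks *s U *s U' *s Q)).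
    unfold Z; ring. rewrite HaZ. ring.
Qed.

Local Infix "*s" := smul (at level 40, left associativity).
Local Infix "+s" := sadd (at level 50, left associativity).
Local Infix "-s" := ssub (at level 50, left associativity).

Lemma L3 (Q3 a u b v ab au bb wb Ess Nss Err Ers Nrs c1 c2 : ser) :
  a *s u = sone -> b *s v = sone -> ab *s au = sone -> bb *s wb = sone ->
  Ess *s Nss = sone -> Ers *s Nrs = sone ->
  (a -s b) +s sX *s (sX *s (Ers *s Ess *s u -s Err *s Ers *s v)) = sX *s c1 ->
  (au -s bb) +s sY *s (sY *s (Nrs *s Ess *s ab -s Err *s Nrs *s wb)) = sY *s c2 ->
  Q3 = sone -s sX *s sY *s Ess *s u *s ab +s sX *s sY *s Err *s v *s wb *s Q3 ->
  (sX *s Q3 = sX *s bb *s ab -s sY *s b *s ab *s Nrs +s sY *s Ess *s a *s ab *s Q3 *s Nrs *s Nss <->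
   sX *s (sY *s c2) = sX *s (sY *s (Nrs *s c1))).
Proof.
  intros Hq Hs Hp Hr Hn Ht H1 H2 Hb.
  set (R1 := sone -s sX *s (sY *s Ess *s u *s ab)).
  set (W3 := sone -s sX *s (sY *s Err *s v *s wb)).
  set (Z3 := sX -s sY *s a *s ab *s Nrs).
  set (L1 := sX *s bb *s ab -s sY *s b *s ab *s Nrs).
  set (T := sX *s ((au -s bb) +s sY *s (sY *s (Nrs *s Ess *s ab -s Err *s Nrs *s wb))) -s
            sY *s Nrs *s ((a -s b) +s sX *s (sX *s (Ers *s Ess *s u -s Err *s Ers *s v)))).
  assert (Iden : au *s (R1 *s Z3 -s L1 *s W3) = T).
  { assert (E : au *s (R1 *s Z3 -s L1 *s W3) = T
      -s sY *s a *s Nrs *s (ab *s au -s sone)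
      -s sX *s sX *s sY *s Ess *s u *s ((ab *s au -s sone) -s (Nrs *s Ers -s sone))
      +s sX *s sY *s sY *s Ess *s ab *s Nrs *s (u *s a *s (ab *s au -s sone) +s (u *s a -s sone))
      -s sX *s bb *s (ab *s au -s sone)
      +s sY *s b *s Nrs *s (ab *s au -s sone)
      +s sX *s sX *s sY *s Err *s v *s (wb *s bb *s (ab *s au -s sone) +s (wb *s bb -s sone) -s (Nrs *s Ers -s sone))
      -s sX *s sY *s sY *s Err *s wb *s Nrs *s (v *s b *s (ab *s au -s sone) +s (v *s b -s sone)))
      by (unfold R1, W3, Z3, L1, T; ring).
    rewrite E. replace (u *s a) with sone by (rewrite <- Hq; ring).
    replace (Nrs *s Ers) with sone by (rewrite <- Ht; ring).
    replace (wb *s bb) with sone by (rewrite <- Hr; ring).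
    replace (v *s b) with sone by (rewrite <- Hs; ring).
    rewrite Hp. ring. }
  assert (TE : T = sX *s (sY *s c2) -s sX *s (sY *s (Nrs *s c1))).
  { unfold T. rewrite H1, H2. ring. }
  assert (HbW : Q3 *s W3 = R1).
  { transitivity (Q3 -s sX *s sY *s Err *s v *s wb *s Q3). unfold W3; ring.
    rewrite Hb at 1. unfold R1. ring. }
  assert (HaE : sX *s Q3 = sX *s bb *s ab -s sY *s b *s ab *s Nrs +s sY *s Ess *s a *s ab *s Q3 *s Nrs *s Nss
                <-> Q3 *s Z3 = L1).
  { assert (E : sY *s Ess *s a *s ab *s Q3 *s Nrs *s Nss = sY *s a *s ab *s Q3 *s Nrs).
    { transitivity (sY *s a *s ab *s Q3 *s Nrs *s (Ess *s Nss)). ring. rewrite Hn. ring. }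
    rewrite E. unfold Z3, L1. split; intros H.
    - transitivity (sX *s Q3 -s sY *s a *s ab *s Q3 *s Nrs). ring. rewrite H. ring.
    - transitivity (Q3 *s (sX -s sY *s a *s ab *s Nrs) +s sY *s a *s ab *s Q3 *s Nrs). ring.
      rewrite H. ring. }
  apply (iff_trans HaE). split.
  - intros Ha.
    assert (D0 : R1 *s Z3 -s L1 *s W3 = szero).
    { rewrite <- HbW, <- Ha. ring. }
    rewrite D0, TE in Iden.
    transitivity (sX *s (sY *s c2) -s sX *s (sY *s (Nrs *s c1)) +s sX *s (sY *s (Nrs *s c1))). ring.
    rewrite <- Iden. ring.
  - intros Hc.
    assert (D0 : R1 *s Z3 -s L1 *s W3 = szero).
    { transitivity (ab *s (au *s (R1 *s Z3 -s L1 *s W3)) +s (sone -s ab *s au) *s (R1 *s Z3 -s L1 *s W3)).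
      ring. rewrite Iden, TE, Hc, Hp. ring. }
    apply (cancel_1mX_eq (sY *s Err *s v *s wb)). fold W3.
    transitivity (R1 *s Z3 -s L1 *s W3 +s W3 *s L1). rewrite <- HbW. ring.
    rewrite D0. ring.
Qed.

Lemma sexp_inv' f : smul (sexp (sopp f)) (sexp f) = sone.
Proof. rewrite <- (sexp_inv f). ring. Qed.

Lemma sswap_C j l : sswap (C j l) = C j l.
Proof. apply sswap_const. Qed.

Ltac normS := repeat progress (rewrite ?ssub_sadd, ?sopp_sadd, ?sopp_sopp, ?sexp_add).
Ltac normH H := repeat progress (rewrite ?ssub_sadd, ?sopp_sadd, ?sopp_sopp, ?sexp_add in H).
Ltac swapH H := repeat progress (rewrite ?sswap_add, ?sswap_sub, ?sswap_mul, ?sswap_exp, ?sswap_opp,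
   ?sswap_DX, ?sswap_C, ?sswap_X, ?sswap_const in H).
Ltac swapS := repeat progress (rewrite ?sswap_add, ?sswap_sub, ?sswap_mul, ?sswap_exp, ?sswap_opp,
   ?sswap_DX, ?sswap_C, ?sswap_X, ?sswap_const).
Ltac bridge H := match type of H with ?L = ?R => transitivity L; [ring | transitivity R; [exact H | ring]] end.

Section J.
Variable j : jet.
Hypothesis Hsym : forall l1 l2, Permutation l1 l2 -> j l1 = j l2.

Lemma Csym : C j (vs :: vr :: nil) = C j (vr :: vs :: nil).
Proof. unfold C. rewrite (Hsym (vs :: vr :: nil) (vr :: vs :: nil)). reflexivity. constructor. Qed.

Lemma jsym a b : j (a :: b :: nil) = j (b :: a :: nil).
Proof. apply Hsym. constructor. Qed.

Ltac xo := unfold C; repeat (apply xonly_add || apply xonly_sub || apply xonly_mul || apply xonly_exp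
   || apply xonly_opp || apply xonly_X || apply xonly_const || apply xonly_inX).

Lemma E1 : dH1b j -> (dH1a j <-> dH1c j).
Proof.
  unfold dH1a, dH1b, dH1c. rewrite Csym. intros Hb. normH Hb. normS.
  pose proof (L12 (sexp (Dop2 j vt vt)) (sexp (sopp (DX j vt (vs :: nil)))) (sexp (sopp (DY j vt (vs :: nil))))
     (sexp (sopp (DX j vt (vr :: nil)))) (sexp (sopp (DY j vt (vr :: nil))))
     (sexp (DX j vt (vs :: nil))) (sexp (DY j vt (vs :: nil))) (sexp (DX j vt (vr :: nil))) (sexp (DY j vt (vr :: nil)))
     (smul (sexp (C j (vs :: vs :: nil))) (sexp (C j (vr :: vs :: nil))))
     (smul (sexp (C j (vr :: vr :: nil))) (sexp (C j (vr :: vs :: nil))))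
     (sexp_inv' _) (sexp_inv' _) (sexp_inv' _) (sexp_inv' _)) as L.
  specialize (L ltac:(bridge Hb)).
  pose (h := sadd (ssub (sexp (sopp (DX j vt (vs :: nil)))) (sexp (sopp (DX j vt (vr :: nil)))))
     (smul sX (smul sX (ssub (smul (smul (sexp (C j (vs :: vs :: nil))) (sexp (C j (vr :: vs :: nil)))) (sexp (DX j vt (vs :: nil))))
                             (smul (smul (sexp (C j (vr :: vr :: nil))) (sexp (C j (vr :: vs :: nil)))) (sexp (DX j vt (vr :: nil)))))))).
  assert (Hsw : sswap h = sadd (ssub (sexp (sopp (DY j vt (vs :: nil)))) (sexp (sopp (DY j vt (vr :: nil)))))
     (smul sY (smul sY (ssub (smul (smul (sexp (C j (vs :: vs :: nil))) (sexp (C j (vr :: vs :: nil)))) (sexp (DY j vt (vs :: nil))))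
                             (smul (smul (sexp (C j (vr :: vr :: nil))) (sexp (C j (vr :: vs :: nil)))) (sexp (DY j vt (vr :: nil)))))))).
  { unfold h. swapS. reflexivity. }
  fold h in L. rewrite <- Hsw in L.
  assert (Hxo : xonly h) by (unfold h; xo).
  assert (Hv : h 1%nat O = j (vr :: vt 0 :: nil) - j (vs :: vt 0 :: nil)).
  { unfold h. unfold sadd at 1. rewrite smul_X_l, smul_X_l. unfold ssub. rewrite !sexp_10.
    unfold sopp, DX, inX, Dop1. simpl. rewrite ?Ropp_0, ?exp_0. rewrite (jsym (vt 0) vs), (jsym (vt 0) vr). field. }
  split.
  - intros Ha. assert (Hc := proj1 L ltac:(bridge Ha)). apply extract in Hc; auto.
    rewrite Hv in Hc. transitivity h. unfold h; ring. exact Hc.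
  - intros Hc.
    assert (Hh : h = smul sX (sconst (j (vr :: vt 0 :: nil) - j (vs :: vt 0 :: nil)))).
    { transitivity (sadd (sadd (sexp (sopp (DX j vt (vs :: nil)))) (sopp (sexp (sopp (DX j vt (vr :: nil))))))
       (smul (smul sX sX) (sadd (smul (smul (sexp (C j (vr :: vs :: nil))) (sexp (C j (vs :: vs :: nil))))
           (sexp (DX j vt (vs :: nil))))
           (sopp (smul (smul (sexp (C j (vr :: vr :: nil))) (sexp (C j (vr :: vs :: nil)))) (sexp (DX j vt (vr :: nil)))))))).
      unfold h; ring. exact Hc. }
    assert (HY : smul sY h = smul sX (sswap h)) by (rewrite Hh; swapS; ring).
    assert (Ha := proj2 L HY). bridge Ha.
Qed.

Lemma E2 : dH2b j -> (dH2a j <-> dH2c j).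
Proof.
  unfold dH2a, dH2b, dH2c. rewrite Csym. intros Hb. normH Hb. normS.
  pose proof (L12 (sexp (Dop2 j vtb vtb)) (sexp (DX j vtb (vs :: nil))) (sexp (DY j vtb (vs :: nil)))
     (sexp (sopp (DX j vtb (vr :: nil)))) (sexp (sopp (DY j vtb (vr :: nil))))
     (sexp (sopp (DX j vtb (vs :: nil)))) (sexp (sopp (DY j vtb (vs :: nil)))) (sexp (DX j vtb (vr :: nil))) (sexp (DY j vtb (vr :: nil)))
     (smul (sexp (C j (vs :: vs :: nil))) (sexp (sopp (C j (vr :: vs :: nil)))))
     (smul (sexp (C j (vr :: vr :: nil))) (sexp (sopp (C j (vr :: vs :: nil)))))
     (sexp_inv _) (sexp_inv _) (sexp_inv' _) (sexp_inv' _)) as L.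
  specialize (L ltac:(bridge Hb)).
  pose (h := sadd (ssub (sexp (DX j vtb (vs :: nil))) (sexp (sopp (DX j vtb (vr :: nil)))))
     (smul sX (smul sX (ssub (smul (smul (sexp (C j (vs :: vs :: nil))) (sexp (sopp (C j (vr :: vs :: nil))))) (sexp (sopp (DX j vtb (vs :: nil)))))
                             (smul (smul (sexp (C j (vr :: vr :: nil))) (sexp (sopp (C j (vr :: vs :: nil))))) (sexp (DX j vtb (vr :: nil)))))))).
  assert (Hsw : sswap h = sadd (ssub (sexp (DY j vtb (vs :: nil))) (sexp (sopp (DY j vtb (vr :: nil)))))
     (smul sY (smul sY (ssub (smul (smul (sexp (C j (vs :: vs :: nil))) (sexp (sopp (C j (vr :: vs :: nil))))) (sexp (sopp (DY j vtb (vs :: nil)))))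
                             (smul (smul (sexp (C j (vr :: vr :: nil))) (sexp (sopp (C j (vr :: vs :: nil))))) (sexp (DY j vtb (vr :: nil)))))))).
  { unfold h. swapS. reflexivity. }
  fold h in L. rewrite <- Hsw in L.
  assert (Hxo : xonly h) by (unfold h; xo).
  assert (Hv : h 1%nat O = j (vr :: vtb 0 :: nil) + j (vs :: vtb 0 :: nil)).
  { unfold h. unfold sadd at 1. rewrite smul_X_l, smul_X_l. unfold ssub. rewrite !sexp_10.
    unfold sopp, DX, inX, Dop1. simpl. rewrite ?Ropp_0, ?exp_0.
    rewrite (jsym (vtb 0) vs), (jsym (vtb 0) vr). field. }
  split.
  - intros Ha. assert (Hc := proj1 L ltac:(bridge Ha)). apply extract in Hc; auto.
    rewrite Hv in Hc. transitivity h. unfold h; ring. exact Hc.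
  - intros Hc.
    assert (Hh : h = smul sX (sconst (j (vr :: vtb 0 :: nil) + j (vs :: vtb 0 :: nil)))).
    { rewrite <- Hc. unfold h. ring. }
    assert (HY : smul sY h = smul sX (sswap h)) by (rewrite Hh; swapS; ring).
    assert (Ha := proj2 L HY). bridge Ha.
Qed.

Lemma Nrs_eq l : sexp (sopp (C j l)) = sconst (exp (- j l)).
Proof. unfold C. rewrite <- sconst_opp. apply sexp_const. Qed.

Lemma E3 : dH3b j -> dH1c j -> dH2c j -> (dH3a j <-> dH3c j).
Proof.
  unfold dH3a, dH3b, dH1c, dH2c, dH3c. rewrite !Csym. intros Hb H1 H2.
  normH Hb. normH H1. normH H2. normS.
  pose proof (f_equal sswap H2 : @eq ser _ _) as H2Y. swapH H2Y.
  pose proof (L3 (sexp (Dop2 j vt vtb)) (sexp (sopp (DX j vt (vs :: nil)))) (sexp (DX j vt (vs :: nil)))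
    (sexp (sopp (DX j vt (vr :: nil)))) (sexp (DX j vt (vr :: nil)))
    (sexp (sopp (DY j vtb (vs :: nil)))) (sexp (DY j vtb (vs :: nil)))
    (sexp (sopp (DY j vtb (vr :: nil)))) (sexp (DY j vtb (vr :: nil)))
    (sexp (C j (vs :: vs :: nil))) (sexp (sopp (C j (vs :: vs :: nil))))
    (sexp (C j (vr :: vr :: nil))) (sexp (C j (vr :: vs :: nil))) (sexp (sopp (C j (vr :: vs :: nil))))
    (sconst (j (vr :: vt 0 :: nil) - j (vs :: vt 0 :: nil)))
    (sconst (j (vr :: vtb 0 :: nil) + j (vs :: vtb 0 :: nil)))
    (sexp_inv' _) (sexp_inv' _) (sexp_inv' _) (sexp_inv' _) (sexp_inv _) (sexp_inv _)) as L.
  specialize (L ltac:(bridge H1) ltac:(bridge H2Y) ltac:(bridge Hb)).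
  match type of L with (?P <-> ?Q) =>
    split; [intros Ha; assert (Pa : P) by bridge Ha | intros Hc; assert (Qa : Q)] end.
  - apply (proj1 L) in Pa. rewrite Nrs_eq, <- sconst_mul in Pa.
    apply cancel_X, cancel_Y in Pa. exact (f_equal (fun f => f O O) Pa).
  - rewrite Nrs_eq, <- sconst_mul, Hc. reflexivity.
  - apply (proj2 L) in Qa. bridge Qa.
Qed.

End J.

Theorem corollary4 (F : point -> R) (D : list var -> point -> R)
  (HD : is_derivative_family F D) :
  (forall x : point,
     dH1a (jet_at D x) /\ dH1b (jet_at D x) /\ dH2a (jet_at D x) /\
     dH2b (jet_at D x) /\ dH3a (jet_at D x) /\ dH3b (jet_at D x))
  <->
  (forall x : point,
     dH1b (jet_at D x) /\ dH2b (jet_at D x) /\ dH3b (jet_at D x) /\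
     dH1c (jet_at D x) /\ dH2c (jet_at D x) /\ dH3c (jet_at D x)).
Proof.
  assert (Hs : forall x l1 l2, Permutation l1 l2 -> jet_at D x l1 = jet_at D x l2).
  { intros x l1 l2 P. unfold jet_at. destruct HD as [_ [_ H3]]. rewrite (H3 l1 l2 P). reflexivity. }
  split; intros H x; specialize (H x);
    pose proof (E1 _ (Hs x)); pose proof (E2 _ (Hs x)); pose proof (E3 _ (Hs x)); tauto.
Qed.
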